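(* Let $R$ be a ring, let $d_{0}:X_{0}\to X_{1}$ be a homomorphism of right $R$-modules with kernel $K$, and let $\zeta:Q_{0}\to Q_{1}$ be a homomorphism between injective right $R$-modules $Q_0,Q_1$. Then $K\in\mathcal{B}_{\zeta}$ if and only if for every homomorphism $f\in\mathrm{Hom}_{R}(X_{0},Q_{1})$ there exist homomorphisms $s_{0}:X_{0}\to Q_{0}$ and $s_{1}:X_{1}\to Q_{1}$ such that $f=s_{1}d_{0}+\zeta s_{0}$.
   Context: $R$ is a unital associative ring and modules are right $R$-modules. For a homomorphism $\zeta:Q_0\to Q_1$, $\mathcal{B}_{\zeta}=\{X\in\mathrm{Mod}(R)\mid \mathrm{Hom}_R(X,\zeta):\mathrm{Hom}_R(X,Q_0)\to\mathrm{Hom}_R(X,Q_1)\text{ is an epimorphism}\}$. *)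

(* Defs.v *)
(* Right R-modules are modelled as left modules over the
   converse ring R^c (lmodType R^c); homomorphisms are {linear _ -> _}. *)
From HB Require Import structures.
From mathcomp Require Import all_boot all_algebra.
Set Implicit Arguments. Unset Strict Implicit. Unset Printing Implicit Defensive.
Import GRing.Theory.
Local Open Scope ring_scope.

Definition injective_module (R : pzRingType) (Q : lmodType R^c) : Prop :=
  forall (A B : lmodType R^c) (i : {linear A -> B}), injective i ->
  forall f : {linear A -> Q}, exists g : {linear B -> Q}, forall a, g (i a) = f a.

Definition in_B (R : pzRingType) (Q0 Q1 : lmodType R^c)
  (zeta : {linear Q0 -> Q1}) (X : lmodType R^c) : Prop :=
  forall g : {linear X -> Q1}, exists h : {linear X -> Q0}, forall x, zeta (h x) = g x.

Definition is_kernel (R : pzRingType) (X0 X1 K : lmodType R^c)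
  (d0 : {linear X0 -> X1}) (k : {linear K -> X0}) : Prop :=
  [/\ injective k, (forall y, d0 (k y) = 0) &
      (forall x, d0 x = 0 -> exists y, k y = x)].

(* Main.v *)
Require Import Defs.
From HB Require Import structures.
From mathcomp Require Import all_boot all_algebra.
From Stdlib Require Import ClassicalEpsilon.
Set Implicit Arguments. Unset Strict Implicit. Unset Printing Implicit Defensive.
Import GRing.Theory.
Local Open Scope ring_scope.

Definition imP (R : pzRingType) (X0 X1 : lmodType R^c) (d0 : {linear X0 -> X1}) : {pred X1} :=
  fun x => if excluded_middle_informative (exists y, d0 y = x) then true else false.

Lemma imPE (R : pzRingType) (X0 X1 : lmodType R^c) (d0 : {linear X0 -> X1}) x :
  reflect (exists y, d0 y = x) (x \in imP d0).
Proof. rewrite /in_mem /= /imP; case: excluded_middle_informative => H; constructor => //. Qed.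

Lemma imP_closed (R : pzRingType) (X0 X1 : lmodType R^c) (d0 : {linear X0 -> X1}) :
  submod_closed (imP d0).
Proof.
split; first by apply/imPE; exists 0; rewrite linear0.
move=> a u v /imPE [y <-] /imPE [z <-]; apply/imPE; exists (a *: y + z).
by rewrite linearD linearZ.
Qed.

HB.instance Definition _ (R : pzRingType) (X0 X1 : lmodType R^c) (d0 : {linear X0 -> X1}) :=
  GRing.isSubmodClosed.Build R^c X1 (imP d0) (imP_closed d0).

Definition imT (R : pzRingType) (X0 X1 : lmodType R^c) (d0 : {linear X0 -> X1}) :=
  {x : X1 | x \in imP d0}.

HB.instance Definition _ (R : pzRingType) (X0 X1 : lmodType R^c) (d0 : {linear X0 -> X1}) :=
  [isSub for (@sval X1 (fun x => x \in imP d0)) : imT d0 -> X1].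
HB.instance Definition _ (R : pzRingType) (X0 X1 : lmodType R^c) (d0 : {linear X0 -> X1}) :=
  [Choice of imT d0 by <:].
HB.instance Definition _ (R : pzRingType) (X0 X1 : lmodType R^c) (d0 : {linear X0 -> X1}) :=
  [SubChoice_isSubLmodule of imT d0 by <:].


Definition pre (R : pzRingType) (X0 X1 : lmodType R^c) (d0 : {linear X0 -> X1}) (a : imT d0) : X0 :=
  proj1_sig (constructive_indefinite_description _ (elimT (imPE d0 (val a)) (valP a))).

Lemma preP (R : pzRingType) (X0 X1 : lmodType R^c) (d0 : {linear X0 -> X1}) (a : imT d0) :
  d0 (pre a) = val a.
Proof. exact: (proj2_sig (constructive_indefinite_description _ (elimT (imPE d0 (val a)) (valP a)))). Qed.

Lemma factor (R : pzRingType) (X0 X1 Q : lmodType R^c) (d0 : {linear X0 -> X1})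
  (g : {linear X0 -> Q}) : (forall x, d0 x = 0 -> g x = 0) ->
  exists g' : {linear imT d0 -> Q}, forall x (a : imT d0), val a = d0 x -> g' a = g x.
Proof.
move=> Hg.
have wd : forall x y, d0 x = d0 y -> g x = g y.
  move=> x y e; apply/eqP; rewrite -subr_eq0 -linearB; apply/eqP/Hg.
  by rewrite linearB e subrr.
pose F := fun a : imT d0 => g (pre a).
have lin : linear_for *:%R F.
  move=> r u v; rewrite /F -linearP; apply: wd.
  rewrite linearP !preP /=.
  by [].
pose gl : {linear imT d0 -> Q} := HB.pack F (GRing.isLinear.Build _ _ _ _ F lin).
exists gl => x a e; rewrite /= /F; apply: wd; by rewrite preP.
Qed.

Theorem lemma2p5 (R : pzRingType) (X0 X1 K Q0 Q1 : lmodType R^c)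
  (d0 : {linear X0 -> X1}) (k : {linear K -> X0}) (zeta : {linear Q0 -> Q1}) :
  is_kernel d0 k -> injective_module Q0 -> injective_module Q1 ->
  (in_B zeta K <->
   forall f : {linear X0 -> Q1},
     exists (s0 : {linear X0 -> Q0}) (s1 : {linear X1 -> Q1}),
       forall x, f x = s1 (d0 x) + zeta (s0 x)).
Proof.
move=> [kinj dk kker] injQ0 injQ1; split.
- move=> HB f.
  have [h Hh] := HB (f \o k).
  have [s0 Hs0] := injQ0 _ _ k kinj h.
  have Hk : forall x, d0 x = 0 -> (f \- (zeta \o s0)) x = 0.
    move=> x /kker [y <-]; by rewrite /= Hs0 Hh /= subrr.
  have [g' Hg'] := @factor _ _ _ _ d0 (f \- (zeta \o s0)) Hk.
  have [s1 Hs1] := injQ1 _ _ (val : {linear imT d0 -> X1}) val_inj g'.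
  exists s0, s1 => x.
  pose a : imT d0 := exist _ (d0 x) (introT (imPE d0 _) (ex_intro _ x erefl)).
  have -> : d0 x = val a by [].
  by rewrite Hs1 (Hg' x) //= subrK.
- move=> H g.
  have [f Hf] := injQ1 _ _ k kinj g.
  have [s0 [s1 E]] := H f.
  exists (s0 \o k) => y /=.
  by rewrite -Hf E dk linear0 add0r.
Qed.
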